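(* In the Boosted HiPPA setting of the context, let $\{x^k\}$ and $\{\bar x^k\}$ be generated by the algorithm and let $\bar y^k\in\operatorname{prox}^p_{\gamma\varphi}(x^k)$ satisfy $\|\bar x^k-\bar y^k\|=\operatorname{dist}(\bar x^k,\operatorname{prox}^p_{\gamma\varphi}(x^k))$. Then: (a) $\sum_{k=0}^\infty\|R^{\varepsilon_k}_\gamma(x^k)\|^p<\infty$ and $R^{\varepsilon_k}_\gamma(x^k)\to0$; (b) $\{x^k\},\{\bar x^k\},\{\bar y^k\}$ have the same cluster points (if any), and each cluster point is a proximal fixed point, i.e., a point $\hat x$ with $\hat x\in\operatorname{prox}^p_{\gamma\varphi}(\hat x)$; (c) there is a finite $\mathcal{F}\in\mathbb{R}$ with $\lim_k\varphi^p_\gamma(x^k)=\lim_k\varphi(\bar y^k)=\lim_k\varphi^{p,\varepsilon_k}_\gamma(x^k)=\lim_k\varphi(\bar x^k)=\mathcal{F}$; moreover, if $\hat x$ is a cluster point of $\{x^k\}$ then $\varphi(\hat x)=\varphi^p_\gamma(\hat x)=\mathcal{F}$; finally, if $\{x^k\}$ is bounded then $\lim_k\varphi^p_\gamma(\bar y^k)=\mathcal{F}$; (d) $\varphi$ and $\varphi^p_\gamma$ are constant on the set of cluster points of $\{x^k\}$ (if any).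
   Context: Standing setting. $p>1$; $\varphi:\mathbb{R}^n\to\mathbb{R}\cup\{+\infty\}$ is proper, lsc and bounded from below. For $\gamma>0$: $\operatorname{prox}^p_{\gamma\varphi}(x):=\operatorname{argmin}_y\big(\varphi(y)+\frac1{p\gamma}\|x-y\|^p\big)$, $\varphi^p_\gamma(x):=\inf_y\big(\varphi(y)+\frac1{p\gamma}\|x-y\|^p\big)$. $\{\varepsilon_k\},\{\delta_k\}$ are non-increasing positive sequences with $\sum_k\varepsilon_k<\infty$, $\delta_k\downarrow0$. Prox approximation: for each index $j$ and point $x$ needed, a point $P_j(x)$ (written $\operatorname{prox}^{p,\varepsilon_j}_{\gamma\varphi}(x)$) is available with $\operatorname{dist}(P_j(x),\operatorname{prox}^p_{\gamma\varphi}(x))<\delta_j$ and $\varphi(P_j(x))+\frac1{p\gamma}\|x-P_j(x)\|^p<\varphi^p_\gamma(x)+\varepsilon_j$. Define $\varphi^{p,\varepsilon_j}_\gamma(x):=\varphi(P_j(x))+\frac1{p\gamma}\|x-P_j(x)\|^p$, $R^{\varepsilon_j}_\gamma(x):=x-P_j(x)$. Boosted HiPPA: choose $x^0$, $\gamma>0$, $\sigma\in(0,\frac1{p\gamma})$, $\vartheta\in(0,1)$. At iteration $k$: $\bar x^k:=P_k(x^k)$; choose a direction $d^k$; for $m=0,1,\dots$ set $\alpha_k=\vartheta^m$, $\hat x^{k+1}=(1-\alpha_k)\bar x^k+\alpha_k(x^k+d^k)$, until $\varphi^{p,\varepsilon_{k+1}}_\gamma(\hat x^{k+1})\le\varphi^{p,\varepsilon_k}_\gamma(x^k)-\sigma\|R^{\varepsilon_k}_\gamma(x^k)\|^p+\varepsilon_k+\varepsilon_{k+1}$;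 set $x^{k+1}=\hat x^{k+1}$. *)

(* Defs.v *)
From HB Require Import structures.
From mathcomp Require Import all_boot all_order all_algebra.
From mathcomp Require Import all_classical all_reals all_analysis.
Set Implicit Arguments. Unset Strict Implicit. Unset Printing Implicit Defensive.
Import Order.TTheory GRing.Theory Num.Theory.
Import numFieldNormedType.Exports.
Local Open Scope classical_set_scope.
Local Open Scope ring_scope.

Definition enorm {R : realType} {n : nat} (v : 'rV[R]_n) : R :=
  Num.sqrt (\sum_(i < n) (v ord0 i) ^+ 2).

Definition proper_fun {R : realType} {n : nat} (phi : 'rV[R]_n -> \bar R) : Prop :=
  (exists x, (phi x < +oo)%E) /\ (forall x, (-oo < phi x)%E).

Definition bounded_below {R : realType} {n : nat} (phi : 'rV[R]_n -> \bar R) : Prop :=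
  exists m : R, forall x, (m%:E <= phi x)%E.

Definition prox_obj {R : realType} {n : nat} (p gamma : R)
  (phi : 'rV[R]_n -> \bar R) (x y : 'rV[R]_n) : \bar R :=
  (phi y + (((p * gamma)^-1) * (enorm (x - y)) `^ p)%:E)%E.

Definition prox {R : realType} {n : nat} (p gamma : R)
  (phi : 'rV[R]_n -> \bar R) (x : 'rV[R]_n) : set 'rV[R]_n :=
  [set y | forall z, (prox_obj p gamma phi x y <= prox_obj p gamma phi x z)%E].

Definition env {R : realType} {n : nat} (p gamma : R)
  (phi : 'rV[R]_n -> \bar R) (x : 'rV[R]_n) : \bar R :=
  ereal_inf (range (prox_obj p gamma phi x)).

Definition approx_env {R : realType} {n : nat} (p gamma : R)
  (phi : 'rV[R]_n -> \bar R) (P : nat -> 'rV[R]_n -> 'rV[R]_n) (j : nat)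
  (x : 'rV[R]_n) : \bar R :=
  prox_obj p gamma phi x (P j x).

(* P is an inexact prox oracle: dist(P_j x, prox(x)) < delta_j and
   phi^{p,eps_j}(x) < phi^p_gamma(x) + eps_j.  (dist(z,S) < d is written as
   "some s in S has ||z - s|| < d", which is literally equivalent.) *)
Definition prox_oracle {R : realType} {n : nat} (p gamma : R)
  (phi : 'rV[R]_n -> \bar R) (eps delta : nat -> R)
  (P : nat -> 'rV[R]_n -> 'rV[R]_n) : Prop :=
  forall (j : nat) (x : 'rV[R]_n),
    (exists2 y, prox p gamma phi x y & enorm (P j x - y) < delta j) /\
    (approx_env p gamma phi P j x < env p gamma phi x + (eps j)%:E)%E.

Definition descent_test {R : realType} {n : nat} (p gamma sigma : R)
  (phi : 'rV[R]_n -> \bar R) (eps : nat -> R)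
  (P : nat -> 'rV[R]_n -> 'rV[R]_n) (k : nat) (xk xhat : 'rV[R]_n) : Prop :=
  (approx_env p gamma phi P k.+1 xhat <=
     approx_env p gamma phi P k xk
     - (sigma * (enorm (xk - P k xk)) `^ p)%:E + (eps k)%:E + (eps k.+1)%:E)%E.

Definition cluster_pt {R : realType} {n : nat} (u : nat -> 'rV[R]_n)
  (z : 'rV[R]_n) : Prop :=
  exists s : nat -> nat, (forall k, (s k < s k.+1)%N) /\
    (fun k => enorm (u (s k) - z)) @ \oo --> 0.

(* Main.v *)
Require Import Defs.
From HB Require Import structures.
From mathcomp Require Import all_boot all_order all_algebra.
From mathcomp Require Import all_classical all_reals all_analysis.
From mathcomp Require Import ring lra.
Import Order.TTheory GRing.Theory Num.Theory.
Import numFieldNormedType.Exports.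
Local Open Scope classical_set_scope.
Local Open Scope ring_scope.


Section enorm_lemmas.
Context {R : realType} {n : nat}.
Implicit Types u v w : 'rV[R]_n.

Lemma enorm_ge0 v : 0 <= enorm v.
Proof. exact: sqrtr_ge0. Qed.

Lemma enorm0 : enorm (0 : 'rV[R]_n) = 0.
Proof. by rewrite /enorm big1 ?sqrtr0// => i _; rewrite mxE expr0n. Qed.

Lemma enormN v : enorm (- v) = enorm v.
Proof. by rewrite /enorm; congr Num.sqrt; apply: eq_bigr => i _; rewrite mxE sqrrN. Qed.

Lemma enormB u v : enorm (u - v) = enorm (v - u).
Proof. by rewrite -enormN opprB. Qed.

Lemma CS (a b : 'I_n -> R) :
  \sum_i a i * b i <= Num.sqrt (\sum_i a i ^+ 2) * Num.sqrt (\sum_i b i ^+ 2).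
Proof.
set A := \sum_i a i ^+ 2; set B := \sum_i b i ^+ 2.
have A0 : 0 <= A by apply: sumr_ge0 => i _; exact: sqr_ge0.
have B0 : 0 <= B by apply: sumr_ge0 => i _; exact: sqr_ge0.
have [Ae0|Agt0] := eqVneq A 0.
  have ai : forall i, a i = 0.
    move=> i; apply/eqP; rewrite -sqrf_eq0.
    by move/eqP: Ae0; rewrite psumr_eq0 => [/allP/(_ i (mem_index_enum _))|j _]; [|exact: sqr_ge0].
  by rewrite big1 ?mulr_ge0 ?sqrtr_ge0// => i _; rewrite ai mul0r.
have [Be0|Bgt0] := eqVneq B 0.
  have bi : forall i, b i = 0.
    move=> i; apply/eqP; rewrite -sqrf_eq0.
    by move/eqP: Be0; rewrite psumr_eq0 => [/allP/(_ i (mem_index_enum _))|j _]; [|exact: sqr_ge0].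
  by rewrite big1 ?mulr_ge0 ?sqrtr_ge0// => i _; rewrite bi mulr0.
set u := Num.sqrt A; set w := Num.sqrt B.
have u0 : 0 < u by rewrite sqrtr_gt0 lt_neqAle eq_sym Agt0 A0.
have w0 : 0 < w by rewrite sqrtr_gt0 lt_neqAle eq_sym Bgt0 B0.
have : 0 <= \sum_i (a i * w - b i * u) ^+ 2 by apply: sumr_ge0 => i _; exact: sqr_ge0.
have -> : \sum_i (a i * w - b i * u) ^+ 2 =
    w ^+ 2 * A - 2 * u * w * (\sum_i a i * b i) + u ^+ 2 * B.
  rewrite /A /B !mulr_sumr -!sumrB -big_split /=; apply: eq_bigr => i _; ring.
rewrite !sqr_sqrtr //.
have -> : B * A - 2 * u * w * (\sum_i a i * b i) + A * B =
   2 * (u * w) * (u * w - \sum_i a i * b i).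
  have uu : A = u ^+ 2 by rewrite sqr_sqrtr.
  have ww : B = w ^+ 2 by rewrite sqr_sqrtr.
  rewrite uu ww; ring.
rewrite pmulr_rge0 ?subr_ge0// mulr_gt0 ?mulr_gt0//.
Qed.

Lemma enormD u v : enorm (u + v) <= enorm u + enorm v.
Proof.
rewrite /enorm -(@ler_pXn2r _ 2)// ?nnegrE ?addr_ge0 ?sqrtr_ge0//.
rewrite sqr_sqrtr; last by apply: sumr_ge0 => i _; exact: sqr_ge0.
rewrite sqrrD !sqr_sqrtr; try by apply: sumr_ge0 => i _; exact: sqr_ge0.
have -> : \sum_i (u + v) ord0 i ^+ 2 =
  \sum_i u ord0 i ^+ 2 + 2 * \sum_i u ord0 i * v ord0 i + \sum_i v ord0 i ^+ 2.
  rewrite mulr_sumr -!big_split /=; apply: eq_bigr => i _; rewrite mxE; ring.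
rewrite lerD2r lerD2l.
have := CS (fun i => u ord0 i) (fun i => v ord0 i) => /=; lra.

Qed.

Lemma enorm_tri u v w : enorm (u - w) <= enorm (u - v) + enorm (v - w).
Proof. by have := enormD (u - v) (v - w); rewrite addrA subrK. Qed.

Lemma mxnorm_le_enorm v : `|v| <= enorm v.
Proof.
have -> : `|v| = mx_norm v by [].
rewrite mx_normrE; apply: bigmax_le => [|[i j] _]; first exact: enorm_ge0.
rewrite /= (ord1 i) /enorm -sqrtr_sqr ler_sqrt; last first.
  by apply: sumr_ge0 => k _; exact: sqr_ge0.
rewrite (bigD1 j)//= lerDl; apply: sumr_ge0 => k _; exact: sqr_ge0.
Qed.

End enorm_lemmas.

Section powR_lemmas.
Context {R : realType}.

Lemma powR_le_small (p u e : R) : 0 < p -> 0 <= u -> 0 < e -> u <= e `^ p^-1 -> u `^ p <= e.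
Proof.
move=> p0 u0 e0 ue.
have -> : e = (e `^ p^-1) `^ p by rewrite -powRrM mulVf ?gt_eqF// powRr1// ltW.
by apply: ge0_ler_powR => //; rewrite ?nnegrE ?powR_ge0// ltW.
Qed.

Lemma powR_lt_inv (p u e : R) : 0 < p -> 0 <= u -> 0 <= e -> u `^ p < e `^ p -> u < e.
Proof.
move=> p0 u0 e0; apply: contraTT; rewrite -!leNgt => eu.
by apply: ge0_ler_powR => //; rewrite ?nnegrE// ltW.
Qed.

Lemma powR_incr (p K eta : R) : 0 < p -> 0 <= K -> 0 < eta ->
  exists2 del, 0 < del & forall b t, 0 <= b -> b <= K -> 0 <= t -> t <= del ->
    (b + t) `^ p <= b `^ p + eta.
Proof.
move=> p0 K0 e0.
set h := eta / 2.
have h0 : 0 < h by rewrite divr_gt0.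
have Kp0 : 0 <= K `^ p by apply: powR_ge0.
set alpha := h / (K `^ p + 1).
have a0 : 0 < alpha by rewrite divr_gt0// ltr_wpDl.
set c := (1 + alpha) `^ p^-1.
have cp : c `^ p = 1 + alpha by rewrite -powRrM mulVf ?gt_eqF// powRr1// addr_ge0// ltW.
have c1 : 1 < c.
  have pi0 : 0 < p^-1 by rewrite invr_gt0.
  have := @gt0_ltr_powR R p^-1 pi0 1 (1 + alpha).
  rewrite powR1 => -> //; rewrite ?nnegrE ?addr_ge0// ?ltW//.
  by rewrite ltrDl.
set s := c - 1.
have s0 : 0 < s by rewrite subr_gt0.
have c0 : 0 < c by apply: lt_trans c1.
set hp := h `^ p^-1.
have hp0 : 0 < hp by apply: powR_gt0.
exists (hp * s / c); first by rewrite !divr_gt0// mulr_gt0.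
move=> b t b0 bK t0 tdel.
have bpK : b `^ p <= K `^ p by apply: ge0_ler_powR => //; rewrite ?nnegrE// ltW.
have [tbs|bst] := leP t (b * s).
  have : (b + t) `^ p <= (b * c) `^ p.
    apply: (@ge0_ler_powR R p (ltW p0) (b + t) (b * c)); rewrite ?nnegrE ?addr_ge0 ?mulr_ge0// ?(ltW c0)//.
    rewrite /s mulrBr mulr1 in tbs; lra.
  move/le_trans; apply.
  rewrite powRM ?(ltW c0)// cp mulrDr mulr1 lerD2l.
  have : b `^ p * alpha <= K `^ p * alpha by rewrite ler_wpM2r// ltW.
  move/le_trans; apply.
  rewrite /alpha mulrA ler_pdivrMr ?ltr_wpDl//.
  have : h <= eta by rewrite /h; lra.
  nra.
have : (b + t) `^ p <= h.
  apply: powR_le_small => //; rewrite ?addr_ge0//.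
  have e1 : t * c <= hp * s by move: tdel; rewrite ler_pdivlMr// ler_pdivrMr// mulrAC.
  have cs : c = 1 + s by rewrite /s; lra.
  rewrite cs in e1.
  have : (b + t - hp) * s < 0 by nra.
  by rewrite pmulr_llt0// -/hp; lra.
move=> H; have := powR_ge0 b p; move: H; rewrite /h; lra.
Qed.

End powR_lemmas.


Section helpers.
Context {R : realType}.

Lemma incr_to_oo {s : nat -> nat} : (forall k, (s k < s k.+1)%N) -> s @ \oo --> \oo.
Proof.
move=> Hs; have ks : forall k, (k <= s k)%N.
  elim=> [|k IH]; first exact: leq0n.
  exact: leq_ltn_trans IH (Hs k).
apply/cvgnyPge => A; apply: filterS (nbhs_infty_ge A) => k Ak.
exact: leq_trans Ak (ks k).
Qed.

Lemma sub_cvg {s : nat -> nat} {u : nat -> R} {l : R} :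
  (forall k, (s k < s k.+1)%N) -> u @ \oo --> l -> (fun k => u (s k)) @ \oo --> l.
Proof. by move=> Hs Hu; apply: (cvg_comp s u (incr_to_oo Hs) Hu). Qed.

Lemma pow_cvg0 (p : R) (u : nat -> R) : 0 < p -> (forall k, 0 <= u k) ->
  u @ \oo --> 0 -> (fun k => u k `^ p) @ \oo --> 0.
Proof.
move=> p0 u0 /cvgr0Pnorm_lt Hu; apply/cvgr0Pnorm_lt => e e0.
have e20 : 0 < e / 2 by rewrite divr_gt0.
have := Hu _ (powR_gt0 p^-1 e20); apply: filterS => k Hk.
rewrite ger0_norm ?powR_ge0//.
have : u k `^ p <= e / 2.
  by apply: powR_le_small => //; rewrite -(ger0_norm (u0 k)) ltW.
lra.
Qed.

Lemma pow_cvg0_inv (p : R) (u : nat -> R) : 0 < p -> (forall k, 0 <= u k) ->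
  (fun k => u k `^ p) @ \oo --> 0 -> u @ \oo --> 0.
Proof.
move=> p0 u0 /cvgr0Pnorm_lt Hu; apply/cvgr0Pnorm_lt => e e0.
have := Hu _ (powR_gt0 p e0); apply: filterS => k Hk.
rewrite ger0_norm//; apply: (powR_lt_inv _ _ _ p0) => //; first exact: ltW.
by move: Hk; rewrite ger0_norm ?powR_ge0.
Qed.

Lemma cvgE_fin (f : nat -> \bar R) (g : nat -> R) (l : R) :
  (forall k, f k = (g k)%:E) -> g @ \oo --> l -> f @ \oo --> l%:E.
Proof.
move=> fE Hg; have -> : f = (fun k => (g k)%:E) by apply: funext.
apply: cvg_EFin; first exact: nearW.
exact: Hg.
Qed.

Lemma cluster_transfer {n : nat} (u w : nat -> 'rV[R]_n) z :
  (fun k => enorm (u k - w k)) @ \oo --> 0 -> cluster_pt u z -> cluster_pt w z.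
Proof.
move=> Huw [s [Hs Hz]]; exists s; split=> //.
apply: (@squeeze_cvgr _ _ _ _ (fun=> 0)
   (fun k => enorm (u (s k) - w (s k)) + enorm (u (s k) - z))).
- apply: nearW => k; rewrite enorm_ge0 /=.
  by rewrite (enormB (u (s k))); apply: enorm_tri.
- exact: cvg_cst.
- rewrite -[0](addr0 0); apply: cvgD => //.
  exact: (sub_cvg Hs Huw).
Qed.

End helpers.


Lemma fin_of {R : realType} (u : \bar R) (a : R) : (a%:E <= u)%E -> (u < +oo)%E -> u = (fine u)%:E.
Proof. by case: u => // [_|]; rewrite ?ltxx ?leeNy_eq. Qed.

Lemma ereal_addfin {R : realType} (u : \bar R) (a b : R) : (u + a%:E)%E = b%:E -> u = (b - a)%:E.
Proof. by case: u => //= r [<-]; rewrite addrK. Qed.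

Section main.
Variables (R : realType) (n : nat) (p gamma sigma : R)
  (phi : 'rV[R]_n -> \bar R) (eps delta : nat -> R)
  (P : nat -> 'rV[R]_n -> 'rV[R]_n) (x xbar ybar : nat -> 'rV[R]_n) (m0 : R).
Hypothesis p1 : 1 < p.
Hypothesis g0 : 0 < gamma.
Hypothesis sig0 : 0 < sigma.
Hypothesis phiNy : forall z, (-oo < phi z)%E.
Hypothesis phifin : exists z, (phi z < +oo)%E.
Hypothesis lsc : lower_semicontinuous phi.
Hypothesis lb : forall z, (m0%:E <= phi z)%E.
Hypothesis eps0 : forall k, 0 < eps k.
Hypothesis epscvg : cvgn (series eps).
Hypothesis deltacvg : delta @ \oo --> 0.
Hypothesis oracle : prox_oracle p gamma phi eps delta P.
Hypothesis xbarE : forall k, xbar k = P k (x k).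
Hypothesis desc : forall k, descent_test p gamma sigma phi eps P k (x k) (x k.+1).
Hypothesis ybarP : forall k, prox p gamma phi (x k) (ybar k).
Hypothesis ybarN : forall k y, prox p gamma phi (x k) y ->
  enorm (xbar k - ybar k) <= enorm (xbar k - y).

Local Notation c := ((p * gamma)^-1).
Let p0 : 0 < p. Proof. by apply: lt_trans p1. Qed.
Let c0 : 0 < c. Proof. by rewrite invr_gt0 mulr_gt0. Qed.
Local Notation po := (prox_obj p gamma phi).
Local Notation envp := (env p gamma phi).

Let po_ge z y : ((m0 + c * enorm (z - y) `^ p)%:E <= po z y)%E.
Proof. by rewrite /prox_obj EFinD; apply: leeD. Qed.

Let po_ge' z y : (m0%:E <= po z y)%E.
Proof.
apply: le_trans (po_ge z y); rewrite lee_fin lerDl.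
by rewrite mulr_ge0 ?powR_ge0// ltW.
Qed.

Let env_ge z : (m0%:E <= envp z)%E.
Proof. by apply/ereal_infP => _ [y _ <-]; exact: po_ge'. Qed.

Let env_le z y : (envp z <= po z y)%E.
Proof. by apply: ge_ereal_inf; exists (po z y) => //; exists y. Qed.

Let env_lt z : (envp z < +oo)%E.
Proof.
have [z0 Hz0] := phifin; apply: le_lt_trans (env_le z z0) _.
by rewrite /prox_obj; apply: lte_add_pinfty => //; exact: ltry.
Qed.

Let envr z := fine (envp z).
Let envE z : envp z = (envr z)%:E.
Proof. exact: fin_of (env_ge z) (env_lt z). Qed.

Let a k := fine (approx_env p gamma phi P k (x k)).
Let r k := enorm (x k - xbar k).
Let q k := enorm (x k - ybar k).

Let aE k : approx_env p gamma phi P k (x k) = (a k)%:E.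
Proof.
rewrite /a; apply: (@fin_of R _ m0); first exact: (po_ge' (x k) (P k (x k))).
have [_ H] := oracle k (x k); apply: lt_trans H _.
by rewrite envE -EFinD ltry.
Qed.

Let e_le_a k : envr (x k) <= a k.
Proof. by rewrite -lee_fin -envE -aE; exact: env_le. Qed.

Let a_lt k : a k < envr (x k) + eps k.
Proof. by have [_ H] := oracle k (x k); move: H; rewrite aE envE -EFinD lte_fin. Qed.

Let a_ge k : m0 <= a k.
Proof. by rewrite -lee_fin -aE; exact: po_ge'. Qed.

Let phixbar k : phi (xbar k) = (a k - c * r k `^ p)%:E.
Proof.
apply: ereal_addfin; rewrite -aE /approx_env /prox_obj -xbarE.
by [].
Qed.

Let pobar k : po (x k) (ybar k) = envp (x k).
Proof.
apply/le_anti/andP; split; last exact: env_le.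
by apply/ereal_infP => _ [y _ <-]; exact: ybarP.
Qed.

Let phiybar k : phi (ybar k) = (envr (x k) - c * q k `^ p)%:E.
Proof. by apply: ereal_addfin; rewrite -envE -pobar. Qed.

Let desc_r k : a k.+1 <= a k - sigma * r k `^ p + eps k + eps k.+1.
Proof.
have := desc k; rewrite /descent_test aE aE -xbarE.
by rewrite -EFinB -!EFinD lee_fin.
Qed.

Let T := series eps.
Let S := limn T.
Let T_nd : {homo T : i j / (i <= j)%N >-> i <= j}.
Proof. by apply: nondecreasing_series => k _ _; exact: ltW. Qed.
Let T_le k : T k <= S.
Proof. exact: (nondecreasing_cvgn_le T_nd epscvg). Qed.
Let T_ge0 k : 0 <= T k.
Proof. by have := T_nd 0 k (leq0n k); rewrite /T /series /= big_geq. Qed.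

Let sum_bound N : sigma * series (fun k => r k `^ p) N + a N <= a 0%N + T N + T N.+1.
Proof.
elim: N => [|N IH].
  rewrite /T /series /= !big_nil big_nat1 mulr0 add0r.
  by have := eps0 0; move: (a 0%N) (eps 0) => u v; lra.
have e1 : T N.+1 = T N + eps N by rewrite /T seriesSr.
have e2 : T N.+2 = T N.+1 + eps N.+1 by rewrite /T seriesSr.
have e3 : series (fun k => r k `^ p) N.+1 = series (fun k => r k `^ p) N + r N `^ p.
  by rewrite seriesSr.
rewrite e3 e2 mulrDr; have := desc_r N; move: IH e1.
move: (sigma * series (fun k => r k `^ p) N) (sigma * r N `^ p) (a N.+1) (a N) (a 0%N).
move: (T N.+1) (T N) (eps N) (eps N.+1) => t1 t0 e0 e1' A B C D E; lra.
Qed.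


Let rp_cvg : cvgn (series (fun k => r k `^ p)).
Proof.
apply: nondecreasing_is_cvgn.
  by apply: nondecreasing_series => k _ _; exact: powR_ge0.
exists ((a 0%N + S + S - m0) / sigma) => _ [N _ <-].
rewrite ler_pdivlMr// [_ * sigma]mulrC.
have := sum_bound N; have := a_ge N; have := T_le N; have := T_le N.+1.
move: (sigma * series (fun k => r k `^ p) N) (a N) (a 0%N) (T N) (T N.+1) S.
move=> A B C D E G; lra.
Qed.

Let r_ge0 k : 0 <= r k. Proof. exact: enorm_ge0. Qed.
Let q_ge0 k : 0 <= q k. Proof. exact: enorm_ge0. Qed.

Let r_cvg0 : r @ \oo --> 0.
Proof. exact: (pow_cvg0_inv _ _ p0 r_ge0 (cvg_series_cvg_0 rp_cvg)). Qed.

Let b k := a k - T k - T k.+1.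
Let b_cvg : cvgn b.
Proof.
apply: nonincreasing_is_cvgn.
  apply/nonincreasing_seqP => k; rewrite /b.
  have e1 : T k.+1 = T k + eps k by rewrite /T seriesSr.
  have e2 : T k.+2 = T k.+1 + eps k.+1 by rewrite /T seriesSr.
  have := desc_r k; have : 0 <= sigma * r k `^ p by rewrite mulr_ge0 ?powR_ge0// ltW.
  rewrite e2; move: e1.
  move: (sigma * r k `^ p) (a k) (a k.+1) (T k) (T k.+1) (eps k) (eps k.+1).
  move=> A B C D E G H; lra.
exists (m0 - S - S) => _ [k _ <-]; rewrite /b.
have := a_ge k; have := T_le k; have := T_le k.+1.
move: (a k) (T k) (T k.+1) S => A B C D; lra.
Qed.

Let F := limn b + S + S.

Let a_cvg : a @ \oo --> F.
Proof.
have -> : a = (fun k => b k + T k + T k.+1) by apply: funext => k; rewrite /b; move: (a k) (T k) (T k.+1) => u v w; ring.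
have H : (fun k => T k.+1) @ \oo --> S.
  have H0 : T @ \oo --> S := epscvg.
  by rewrite -(cvg_shiftS T) in H0.
exact: (cvgD (cvgD b_cvg epscvg) H).
Qed.

Let eps_cvg0 : eps @ \oo --> 0.
Proof. exact: cvg_series_cvg_0 epscvg. Qed.

Let e_cvg : (fun k => envr (x k)) @ \oo --> F.
Proof.
apply: (@squeeze_cvgr _ _ _ _ (fun k => a k - eps k) a).
- apply: nearW => k; rewrite e_le_a andbT; have := a_lt k.
  by move: (a k) (eps k) (envr (x k)) => u v w; lra.
- by rewrite -[F]subr0; exact: (cvgB a_cvg eps_cvg0).
- exact: a_cvg.
Qed.

Let dist_le k : enorm (xbar k - ybar k) <= delta k.
Proof.
have [[y Hy Hd] _] := oracle k (x k).
by apply: le_trans (ybarN _ _ Hy) _; apply: ltW; rewrite xbarE.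
Qed.

Let q_cvg0 : q @ \oo --> 0.
Proof.
apply: (@squeeze_cvgr _ _ _ _ (fun=> 0) (fun k => r k + delta k)).
- apply: nearW => k; rewrite q_ge0 /=.
  by apply: le_trans (enorm_tri _ (xbar k) _) _; rewrite lerD2l.
- exact: cvg_cst.
- by rewrite -[0](addr0 0); exact: (cvgD r_cvg0 deltacvg).
Qed.

Let g k := envr (x k) - c * q k `^ p.
Let g_cvg : g @ \oo --> F.
Proof.
have := cvgB e_cvg (cvgM (cvg_cst c) (pow_cvg0 _ _ p0 q_ge0 q_cvg0)).
by rewrite mulr0 subr0 => H; exact: H.
Qed.

Let h k := a k - c * r k `^ p.
Let h_cvg : h @ \oo --> F.
Proof.
have := cvgB a_cvg (cvgM (cvg_cst c) (pow_cvg0 _ _ p0 r_ge0 r_cvg0)).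
by rewrite mulr0 subr0 => H; exact: H.
Qed.

Let ybar_sub z s : (forall k, (s k < s k.+1)%N) ->
  (fun k => enorm (x (s k) - z)) @ \oo --> 0 ->
  (fun k => enorm (ybar (s k) - z)) @ \oo --> 0.
Proof.
move=> Hs Hz.
apply: (@squeeze_cvgr _ _ _ _ (fun=> 0) (fun k => q (s k) + enorm (x (s k) - z))).
- apply: nearW => k; rewrite enorm_ge0 /=.
  by apply: le_trans (enorm_tri _ (x (s k)) _) _; rewrite /q (enormB (ybar (s k))).
- exact: cvg_cst.
- by rewrite -[0](addr0 0); apply: cvgD => //; exact: (sub_cvg Hs q_cvg0).
Qed.

Let phi_cluster z : cluster_pt x z -> (phi z <= F%:E)%E.
Proof.
move=> [s [Hs Hz]].
have Hy := ybar_sub _ _ Hs Hz.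
have ys : (fun k => ybar (s k)) @ \oo --> z.
  apply/cvgrPdist_lt => e e0.
  move/cvgr0Pnorm_lt: Hy => /(_ e e0); apply: filterS => k.
  rewrite ger0_norm ?enorm_ge0// => H; apply: le_lt_trans (mxnorm_le_enorm _) _.
  by rewrite enormB.
rewrite leNgt; apply/negP => Flt.
have [a0 Fa az] : exists2 a0 : R, F < a0 & (a0%:E < phi z)%E.
  move: Flt (phiNy z); case: (phi z) => [v| |] //.
    rewrite !lte_fin => Fv _; exists ((F + v) / 2).
      by move: F Fv => u Fv; lra.
    by rewrite lte_fin; move: F Fv => u Fv; lra.
  by move=> _ _; exists (F + 1); [move: F => u; lra | exact: ltry].
have [V Vz HV] := lsc _ _ az.
have ev : \forall k \near \oo, V (ybar (s k)) := ys V Vz.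
have gs := sub_cvg Hs g_cvg.
have : a0 <= F.
  rewrite -(cvg_lim (@Rhausdorff R) gs); apply: limr_ge; first exact: cvgP gs.
  by apply: filterS ev => k /HV; rewrite phiybar lte_fin => /ltW.
by move: F Fa => u Fa; lra.
Qed.

Let env_cluster_ge z : cluster_pt x z -> (F%:E <= envp z)%E.
Proof.
move=> [s [Hs Hz]]; apply/ereal_infP => _ [y _ <-].
rewrite /prox_obj.
move: (phiNy y); case Ephi: (phi y) => [v| |] // _; last by rewrite /= leey.
rewrite -EFinD lee_fin.
set bb := enorm (z - y).
apply/ler_addgt0Pr => eta eta0.
have [del del0 Hdel] := powR_incr _ _ _ p0 (enorm_ge0 (z - y)) (divr_gt0 eta0 c0).
have es := sub_cvg Hs e_cvg.
rewrite -(cvg_lim (@Rhausdorff R) es); apply: limr_le; first exact: cvgP es.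
move/cvgr0Pnorm_lt: Hz => /(_ del del0); apply: filterS => k.
rewrite ger0_norm ?enorm_ge0// => Hk.
have H1 : ((envr (x (s k)))%:E <= (v + c * enorm (x (s k) - y) `^ p)%:E)%E.
  by rewrite -envE; have := env_le (x (s k)) y; rewrite /prox_obj Ephi.
rewrite lee_fin in H1; apply: le_trans H1 _.
have H2 : enorm (x (s k) - y) `^ p <= (bb + enorm (x (s k) - z)) `^ p.
  apply: (ge0_ler_powR (ltW p0)); rewrite ?nnegrE ?addr_ge0 ?enorm_ge0//.
  by rewrite [X in _ <= X]addrC /bb; exact: enorm_tri.
have H3 := Hdel bb (enorm (x (s k) - z)) (enorm_ge0 _) (lexx _) (enorm_ge0 _) (ltW Hk).
have : c * enorm (x (s k) - y) `^ p <= c * (bb `^ p + eta / c).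
  by apply: ler_wpM2l; [exact: ltW | exact: le_trans H2 H3].
rewrite mulrDr mulrCA divff ?mulr1 ?gt_eqF//.
by move: (c * _) (c * _) => A B; lra.
Qed.

Let po_self z : po z z = phi z.
Proof. by rewrite /prox_obj subrr enorm0 powR0 ?gt_eqF// mulr0 adde0. Qed.

Let cluster_eq z : cluster_pt x z -> phi z = F%:E /\ envp z = F%:E.
Proof.
move=> Hz; have h1 := phi_cluster _ Hz; have h2 := env_cluster_ge _ Hz.
have h3 : (envp z <= phi z)%E by rewrite -po_self; exact: env_le.
split; apply/le_anti/andP; split => //; [exact: le_trans h2 h3 | exact: le_trans h3 h1].
Qed.

Let cluster_prox z : cluster_pt x z -> prox p gamma phi z z.
Proof.
move=> Hz y; rewrite po_self (cluster_eq _ Hz).1.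
by apply: le_trans (env_cluster_ge _ Hz) _; exact: env_le.
Qed.

Let envybar_cvg : (fun k => envr (ybar k)) @ \oo --> F.
Proof.
apply/cvgrPdist_le => eta eta0.
have e2 : 0 < eta / 2 by rewrite divr_gt0.
set K := (`|F + 1 - m0| / c) `^ p^-1.
have K0 : 0 <= K by apply: powR_ge0.
have cK : c * K `^ p = `|F + 1 - m0|.
  rewrite /K -powRrM mulVf ?gt_eqF// powRr1 ?divr_ge0 ?(ltW c0)//.
  by rewrite mulrC divfK ?gt_eqF.
have [del del0 Hdel] := powR_incr _ _ _ p0 K0 (divr_gt0 e2 c0).
move/cvgrPdist_le: g_cvg => /(_ eta eta0) Hg.
move/cvgrPdist_le: e_cvg => /(_ _ e2) He.
move/cvgr0Pnorm_lt: q_cvg0 => /(_ del del0) Hq.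
apply: filterS (filterI Hg (filterI He Hq)) => k [H1 [H2 H3]].
rewrite ger0_norm ?q_ge0 // in H3.
have up : envr (ybar k) <= g k.
  by rewrite -lee_fin -envE /g -phiybar -po_self; exact: env_le.
have low : F - eta <= envr (ybar k).
  rewrite -lee_fin -envE; apply/ereal_infP => _ [y _ <-].
  rewrite /prox_obj.
  move: (phiNy y) (lb y); case Ephi: (phi y) => [v| |] // _; last by move=> _; rewrite /= leey.
  rewrite lee_fin => vm; rewrite -EFinD lee_fin.
  set bb := enorm (ybar k - y).
  have [bK|Kb] := leP bb K.
    have H4 : ((envr (x k))%:E <= (v + c * enorm (x k - y) `^ p)%:E)%E.
      by rewrite -envE; have := env_le (x k) y; rewrite /prox_obj Ephi.
    rewrite lee_fin in H4.
    have H5 : enorm (x k - y) `^ p <= (bb + q k) `^ p.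
      apply: (ge0_ler_powR (ltW p0)); rewrite ?nnegrE ?addr_ge0 ?enorm_ge0//.
      by rewrite [X in _ <= X]addrC /bb /q; exact: enorm_tri.
    have H6 := Hdel bb (q k) (enorm_ge0 _) bK (q_ge0 k) (ltW H3).
    have H7 : c * enorm (x k - y) `^ p <= c * bb `^ p + eta / 2.
      have := ler_wpM2l (ltW c0) (le_trans H5 H6).
      by rewrite mulrDr mulrCA divff ?mulr1 ?gt_eqF.
    have H8 := le_trans (ler_norm _) H2.
    move: H4 H7 H8; move: (c * enorm (x k - y) `^ p) (c * bb `^ p) (envr (x k)) F.
    by move=> A B C D; lra.
  have H4 : K `^ p <= bb `^ p.
    apply: (ge0_ler_powR (ltW p0)) => //; first by rewrite nnegrE enorm_ge0.
    exact: ltW Kb.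
  have := ler_wpM2l (ltW c0) H4; rewrite cK.
  have := ler_norm (F + 1 - m0); move: vm; move: (c * bb `^ p) `|F + 1 - m0| F.
  by move=> A B D; lra.
rewrite ler_norml in H1; rewrite ler_norml.
move: H1 up low; move: (g k) (envr (ybar k)) F => A B D; lra.
Qed.

Lemma main_result :
  (cvgn (series (fun k => (enorm (x k - xbar k)) `^ p)) /\
   (fun k => enorm (x k - xbar k)) @ \oo --> 0) /\
  ((forall z, (cluster_pt x z <-> cluster_pt xbar z) /\
              (cluster_pt x z <-> cluster_pt ybar z)) /\
   (forall z, cluster_pt x z -> prox p gamma phi z z)) /\
  (exists F : R,
     [/\ (fun k => env p gamma phi (x k)) @ \oo --> F%:E,
         (fun k => phi (ybar k)) @ \oo --> F%:E,
         (fun k => approx_env p gamma phi P k (x k)) @ \oo --> F%:E &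
         (fun k => phi (xbar k)) @ \oo --> F%:E] /\
     (forall z, cluster_pt x z -> phi z = F%:E /\ env p gamma phi z = F%:E) /\
         ((exists M : R, forall k, enorm (x k) <= M) ->
            (fun k => env p gamma phi (ybar k)) @ \oo --> F%:E)) /\
  (forall z1 z2, cluster_pt x z1 -> cluster_pt x z2 ->
     phi z1 = phi z2 /\ env p gamma phi z1 = env p gamma phi z2).
Proof.
have rS : (fun k => enorm (xbar k - x k)) @ \oo --> 0.
  have -> : (fun k => enorm (xbar k - x k)) = r by apply: funext => k; rewrite /r enormB.
  exact: r_cvg0.
have qS : (fun k => enorm (ybar k - x k)) @ \oo --> 0.
  have -> : (fun k => enorm (ybar k - x k)) = q by apply: funext => k; rewrite /q enormB.
  exact: q_cvg0.
split; first by split; [exact: rp_cvg | exact: r_cvg0].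
split.
  split; last exact: cluster_prox.
  move=> z; split; split.
  - exact: (cluster_transfer _ _ _ r_cvg0).
  - exact: (cluster_transfer _ _ _ rS).
  - exact: (cluster_transfer _ _ _ q_cvg0).
  - exact: (cluster_transfer _ _ _ qS).
split.
  exists F; split.
    split.
    - by apply: (cvgE_fin _ _ _ _ e_cvg) => k; exact: envE.
    - by apply: (cvgE_fin _ _ _ _ g_cvg) => k; exact: phiybar.
    - by apply: (cvgE_fin _ _ _ _ a_cvg) => k; exact: aE.
    - by apply: (cvgE_fin _ _ _ _ h_cvg) => k; exact: phixbar.
  split; first exact: cluster_eq.
  by move=> _; apply: (cvgE_fin _ _ _ _ envybar_cvg) => k; exact: envE.
move=> z1 z2 H1 H2; have [a1 b1] := cluster_eq _ H1; have [a2 b2] := cluster_eq _ H2.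
by rewrite a1 a2 b1 b2.
Qed.
End main.

Theorem theorem10 (R : realType) (n : nat) (p gamma sigma theta : R)
  (phi : 'rV[R]_n -> \bar R) (eps delta : nat -> R)
  (P : nat -> 'rV[R]_n -> 'rV[R]_n)
  (x xbar d ybar : nat -> 'rV[R]_n) :
  1 < p ->
  proper_fun phi -> lower_semicontinuous phi -> bounded_below phi ->
  0 < gamma ->
  0 < sigma -> sigma < (p * gamma)^-1 ->
  0 < theta -> theta < 1 ->
  (forall k, 0 < eps k) -> (forall k, eps k.+1 <= eps k) ->
  cvgn (series eps) ->
  (forall k, 0 < delta k) -> (forall k, delta k.+1 <= delta k) ->
  delta @ \oo --> 0 ->
  prox_oracle p gamma phi eps delta P ->
  (* Boosted HiPPA iterations *)
  (forall k, xbar k = P k (x k)) ->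
  (forall k, exists m : nat,
      [/\ x k.+1 = (1 - theta ^+ m) *: xbar k + theta ^+ m *: (x k + d k),
          descent_test p gamma sigma phi eps P k (x k) (x k.+1) &
          forall m' : nat, (m' < m)%N ->
            ~ descent_test p gamma sigma phi eps P k (x k)
                ((1 - theta ^+ m') *: xbar k + theta ^+ m' *: (x k + d k))]) ->
  (* ybar k is a nearest point of prox(x k) to xbar k *)
  (forall k, prox p gamma phi (x k) (ybar k)) ->
  (forall k y, prox p gamma phi (x k) y ->
      enorm (xbar k - ybar k) <= enorm (xbar k - y)) ->
  (* (a) *)
  (cvgn (series (fun k => (enorm (x k - xbar k)) `^ p)) /\
   (fun k => enorm (x k - xbar k)) @ \oo --> 0) /\
  (* (b) *)
  ((forall z, (cluster_pt x z <-> cluster_pt xbar z) /\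
              (cluster_pt x z <-> cluster_pt ybar z)) /\
   (forall z, cluster_pt x z -> prox p gamma phi z z)) /\
  (* (c) *)
  (exists F : R,
     [/\ (fun k => env p gamma phi (x k)) @ \oo --> F%:E,
         (fun k => phi (ybar k)) @ \oo --> F%:E,
         (fun k => approx_env p gamma phi P k (x k)) @ \oo --> F%:E &
         (fun k => phi (xbar k)) @ \oo --> F%:E] /\
     (forall z, cluster_pt x z -> phi z = F%:E /\ env p gamma phi z = F%:E) /\
         ((exists M : R, forall k, enorm (x k) <= M) ->
            (fun k => env p gamma phi (ybar k)) @ \oo --> F%:E)) /\
  (* (d) *)
  (forall z1 z2, cluster_pt x z1 -> cluster_pt x z2 ->
     phi z1 = phi z2 /\ env p gamma phi z1 = env p gamma phi z2).
Proof.
move=> p1 [phifin phiNy] lsc [m0 lb] g0 sig0 _ _ _ eps0 _ epscvg _ _ deltacvg oracle xbarE iter ybarP ybarN.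
have desc : forall k, descent_test p gamma sigma phi eps P k (x k) (x k.+1).
  by move=> k; have [m [_ H _]] := iter k.
eapply main_result; eassumption.
Qed.
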